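(* Let $S \subseteq I_3^d$ be a nonempty set, let $x^1, x^2, x^3 : S \to \{1,2,3\}$ be functions such that for some $\alpha \in S$ the values $x^1(\alpha), x^2(\alpha), x^3(\alpha)$ are pairwise distinct, and for $k=1,2,3$ let $A_k$ be a $(d+1)$-dimensional polystochastic matrix of order $3$ with $\mathrm{supp}(A_k) = I_3^{d+1} \setminus \{(\beta, x^k(\beta)) : \beta \in S\}$. Then there is no vertex $B$ of $\Omega_3^{d+1}$ with $\mathrm{supp}(B) \subseteq \mathrm{supp}(A_1) \cap \mathrm{supp}(A_2) \cap \mathrm{supp}(A_3)$. Consequently, if $\mathcal{A}$ is a family of $(d+1)$-dimensional polystochastic matrices of order $3$ of this form indexed by a set $C$ of functions $S \to \{1,2,3\}$ such that any three distinct members of $C$ take pairwise distinct values at some $\alpha \in S$, then $\Omega_3^{d+1}$ has at least $|C|/2$ vertices.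
   Context: $I_3^m = \{1,2,3\}^m$; $(\beta,j)$ denotes the index in $I_3^{d+1}$ obtained by appending $j$ to $\beta \in I_3^d$. A $m$-dimensional matrix of order $3$ is an array indexed by $I_3^m$; a line is the set of entries obtained by fixing all but one coordinate; a matrix is polystochastic if its entries are nonnegative and each line sums to $1$; $\mathrm{supp}(A)=\{\alpha : a_\alpha \ne 0\}$. $\Omega_3^{m}$ is the polytope of $m$-dimensional polystochastic matrices of order $3$; vertices are its extreme points. Every polystochastic matrix is a convex combination with positive coefficients of vertices whose supports are contained in its support. *)

(* Defs.v *)
From mathcomp Require Import all_boot all_order all_algebra.
Set Implicit Arguments. Unset Strict Implicit. Unset Printing Implicit Defensive.
Import Order.TTheory GRing.Theory Num.Theory.
Local Open Scope ring_scope.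

(* I_3^m : indices with coordinates in 'I_3 (0,1,2 stand for 1,2,3). *)
Definition idx (m : nat) := {ffun 'I_m -> 'I_3}.

Definition mat (R : Type) (m : nat) := {ffun idx m -> R}.

(* (beta, j) : append j as last coordinate. *)
Definition app (d : nat) (beta : idx d) (j : 'I_3) : idx d.+1 :=
  [ffun i : 'I_d.+1 => if unlift ord_max i is Some i' then beta i' else j].

(* alpha with coordinate i replaced by j; {setc alpha i j | j} is a line. *)
Definition setc (m : nat) (alpha : idx m) (i : 'I_m) (j : 'I_3) : idx m :=
  [ffun k => if k == i then j else alpha k].

Definition polystochastic (R : numDomainType) (m : nat) (A : mat R m) : Prop :=
  (forall alpha, 0 <= A alpha) /\
  (forall (alpha : idx m) (i : 'I_m), \sum_(j : 'I_3) A (setc alpha i j) = 1).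

Definition supp (R : numDomainType) (m : nat) (A : mat R m) : {set idx m} :=
  [set alpha | A alpha != 0].

Definition vertex (R : numDomainType) (m : nat) (A : mat R m) : Prop :=
  polystochastic A /\
  forall (B C : mat R m) (t : R), polystochastic B -> polystochastic C ->
    0 < t -> t < 1 -> (forall alpha, A alpha = t * B alpha + (1 - t) * C alpha) ->
    B = A /\ C = A.

Definition elS (d : nat) (S : {set idx d}) := {beta : idx d | beta \in S}.

Definition graph (d : nat) (S : {set idx d}) (x : {ffun elS S -> 'I_3}) : {set idx d.+1} :=
  [set app (val b) (x b) | b : elS S].

(* Main.v *)
Require Import Defs.
From mathcomp Require Import all_boot all_order all_algebra.
From Stdlib Require Import Classical.
Set Implicit Arguments. Unset Strict Implicit. Unset Printing Implicit Defensive.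
Import Order.TTheory GRing.Theory Num.Theory.
Local Open Scope ring_scope.

Lemma step (R : realFieldType) m (B P : mat R m) :
  polystochastic B -> polystochastic P -> P != B ->
  (forall a, B a = 0 -> P a = 0) ->
  exists E : mat R m, polystochastic E /\ supp E \proper supp B.
Proof.
move=> [B0 B1] [P0 P1] nPB BP.
have [a0 Da0] : exists a0, P a0 - B a0 != 0.
  apply/existsP; apply: contraR nPB => /existsPn H; apply/eqP/ffunP => a.
  by move: (H a); rewrite negbK subr_eq0 => /eqP.
pose s : R := if 0 < P a0 - B a0 then 1 else -1.
pose D a := s * (P a - B a).
have Dpos : 0 < D a0.
  rewrite /D /s; case: ifP => h; first by rewrite mul1r.
  rewrite mulN1r oppr_gt0 lt_neqAle Da0 /=; by rewrite leNgt h.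
have DB a : B a = 0 -> D a = 0 by move=> h; rewrite /D h (BP _ h) subrr mulr0.
have Dsum a i : \sum_j D (setc a i j) = 0.
  by rewrite -mulr_sumr sumrB P1 B1 subrr mulr0.
have [b Db bmin] : exists2 b, 0 < D b & forall c, 0 < D c -> B b / D b <= B c / D c.
  case: (@arg_minP _ _ _ a0 (fun b => 0 < D b) (fun b => B b / D b) Dpos) => i Hi Hmin.
  by exists i.
have Bb : 0 < B b.
  rewrite lt_neqAle B0 andbT eq_sym; apply/eqP => h.
  by move: Db; rewrite (DB _ h) ltxx.
pose l := B b / D b.
have l0 : 0 < l by rewrite divr_gt0.
exists [ffun a => B a - l * D a]; split; first split.
- move=> a; rewrite ffunE subr_ge0.
  case: (ltP 0 (D a)) => Da.
    by rewrite -ler_pdivlMr // bmin.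
  apply: le_trans (B0 a); by rewrite pmulr_rle0.
- move=> a i; under eq_bigr do rewrite ffunE.
  by rewrite sumrB B1 -mulr_sumr Dsum mulr0 subr0.
rewrite properEneq; apply/andP; split.
  apply/eqP => /setP /(_ b).
  rewrite !inE ffunE /l divfK ?subrr ?eqxx /=; last by rewrite gt_eqF.
  by rewrite (gt_eqF Bb).
apply/subsetP => a; rewrite !inE; apply: contraNN => /eqP h.
by rewrite ffunE h (DB _ h) mulr0 subrr.
Qed.

Lemma exists_vertex (R : realFieldType) m (A : mat R m) :
  polystochastic A -> exists B : mat R m, vertex B /\ supp B \subset supp A.
Proof.
move=> PA.
suff H : forall n (B : mat R m), (#|supp B| <= n)%N -> polystochastic B ->
   exists V : mat R m, vertex V /\ supp V \subset supp B.
  exact: (H _ A (leqnn _) PA).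
elim=> [|n IH] B Hn PB.
  exists B; split => //; split => // P Q t PP PQ t0 t1 HB.
  have h0 a : B a = 0.
    apply/eqP; apply: contraT => h.
    by move: Hn; rewrite leqn0 => /eqP/cards0_eq/setP/(_ a); rewrite !inE h.
  have HPQ a : P a = 0 /\ Q a = 0.
    move: (HB a); rewrite h0 => /esym/eqP; rewrite paddr_eq0 ?mulr_ge0 ?subr_ge0 ?(ltW t1) ?(ltW t0) ?PP.1 ?PQ.1 //.
    by rewrite !mulf_eq0 (gt_eqF t0) subr_eq0 (gt_eqF t1) /= => /andP[/eqP -> /eqP ->].
  by split; apply/ffunP => a; rewrite h0 ?(HPQ a).1 ?(HPQ a).2.
case: (classic (vertex B)) => [VB|NV]; first by exists B.
have [P [Q [t [PP [PQ [t0 [t1 [HB nPQ]]]]]]]] :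
  exists (P Q : mat R m) t, polystochastic P /\ polystochastic Q /\ 0 < t /\ t < 1 /\
    (forall a, B a = t * P a + (1 - t) * Q a) /\ ~ (P = B /\ Q = B).
  apply: NNPP => H; apply: NV; split => // P Q t PP PQ t0 t1 HB.
  apply: NNPP => H2; apply: H; exists P, Q, t; by split; [|split; [|split; [|split; [|split]]]].
have HPQ a : B a = 0 -> P a = 0 /\ Q a = 0.
  move=> h0; move: (HB a); rewrite h0 => /esym/eqP; rewrite paddr_eq0 ?mulr_ge0 ?subr_ge0 ?(ltW t1) ?(ltW t0) ?PP.1 ?PQ.1 //.
  by rewrite !mulf_eq0 (gt_eqF t0) subr_eq0 (gt_eqF t1) /= => /andP[/eqP -> /eqP ->].
have [E [PE pE]] : exists E : mat R m, polystochastic E /\ supp E \proper supp B.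
  case: (eqVneq P B) => [ePB|nPB].
    have nQB : Q != B by apply/eqP => eQB; apply: nPQ.
    by apply: (step PB PQ nQB) => a /HPQ [].
  by apply: (step PB PP nPB) => a /HPQ [].
have [V [VV sV]] := IH E (leq_trans (proper_card pE) Hn) PE.
exists V; split => //; apply: subset_trans sV (proper_sub pE).
Qed.

Lemma cover3 (u v w j : 'I_3) : u != v -> u != w -> v != w -> (j == u) || (j == v) || (j == w).
Proof.
move: u v w j; do 4!case=> [[|[|[|n]]] ?] //.
Qed.

Lemma setc_app d (b : idx d) (j0 j : 'I_3) : setc (app b j0) ord_max j = app b j.
Proof.
apply/ffunP => k; rewrite !ffunE.
case: (unliftP ord_max k) => [k'|] ->; last by rewrite eqxx.
by rewrite eq_sym (negbTE (neq_lift _ _)) ?ffunE ?liftK.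
Qed.

Lemma part1 (R : realFieldType) d (S : {set idx d}) (x0 x1 x2 : {ffun elS S -> 'I_3})
  (A0 A1 A2 B : mat R d.+1) (a : elS S) :
  x0 a != x1 a -> x0 a != x2 a -> x1 a != x2 a ->
  supp A0 = ~: graph x0 -> supp A1 = ~: graph x1 -> supp A2 = ~: graph x2 ->
  polystochastic B -> supp B \subset supp A0 :&: supp A1 :&: supp A2 -> False.
Proof.
move=> h01 h02 h12 e0 e1 e2 [_ B1] sB.
have gx (x : {ffun elS S -> 'I_3}) : app (val a) (x a) \in graph x.
  by apply/imsetP; exists a.
have Bz j : B (app (val a) j) = 0.
  apply/eqP; apply: contraT => hB.
  have : app (val a) j \in supp B by rewrite inE.
  move/(subsetP sB); rewrite !in_setI e0 e1 e2 !in_setC.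
  by case/orP: (cover3 j h01 h02 h12) => [/orP[]|] /eqP ->; rewrite gx ?andbF.
move: (B1 (app (val a) (x0 a)) ord_max).
rewrite (eq_bigr (fun _ => 0)); last by move=> j _; rewrite setc_app Bz.
by rewrite big1 // => /eqP; rewrite eq_sym oner_eq0.
Qed.

From Stdlib Require Import IndefiniteDescription.

Lemma iterop_addn1 n : iterop n addn 1%N 0%N = n.
Proof. by rewrite Monoid.iteropE; elim: n => //= n ->. Qed.

Unset Implicit Arguments.

Theorem mainTheorem10 (R : realFieldType) (d : nat) :
  (forall (S : {set idx d}) (x : 'I_3 -> {ffun elS S -> 'I_3}) (A : 'I_3 -> mat R d.+1),
     S != set0 ->
     (exists a : elS S, [/\ x 0 a != x 1 a, x 0 a != x 2 a & x 1 a != x 2 a]) ->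
     (forall k, polystochastic (A k) /\ supp (A k) = ~: graph (x k)) ->
     ~ exists B : mat R d.+1,
         vertex B /\ supp B \subset supp (A 0) :&: supp (A 1) :&: supp (A 2))
  /\
  (forall (S : {set idx d}) (C : {set {ffun elS S -> 'I_3}})
          (A : {ffun elS S -> 'I_3} -> mat R d.+1),
     S != set0 ->
     (forall c1 c2 c3, c1 \in C -> c2 \in C -> c3 \in C ->
        c1 != c2 -> c1 != c3 -> c2 != c3 ->
        exists a : elS S, [/\ c1 a != c2 a, c1 a != c3 a & c2 a != c3 a]) ->
     (forall c, c \in C -> polystochastic (A c) /\ supp (A c) = ~: graph c) ->
     exists V : seq (mat R d.+1),
       [/\ uniq V, (forall B, B \in V -> vertex B) & (#|C| <= 2 * size V)%N]).
Proof.
split.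
  move=> S x A _ [a [h01 h02 h12]] HA [B [[PB _] sB]].
  exact: (part1 h01 h02 h12 (HA 0).2 (HA 1).2 (HA 2).2 PB sB).
move=> S C A _ Hd HA.
have ex c : exists B : mat R d.+1, c \in C -> vertex B /\ supp B \subset supp (A c).
  case: (boolP (c \in C)) => cC; last by exists (A c).
  have [B HB] := exists_vertex (HA c cC).1; by exists B.
pose f c := proj1_sig (constructive_indefinite_description _ (ex c)).
have fP c : c \in C -> vertex (f c) /\ supp (f c) \subset supp (A c).
  exact: (proj2_sig (constructive_indefinite_description _ (ex c))).
pose t := map f (enum C).
exists (undup t); split; first exact: undup_uniq.
  move=> B; rewrite mem_undup => /mapP [c]; rewrite mem_enum => cC ->.
  exact: (fP c cC).1.
have cnt y : (count_mem y t <= 2)%N.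
  rewrite count_map leqNgt; apply/negP => h3.
  have : (2 < size (filter (preim f (pred1 y)) (enum C)))%N by rewrite size_filter.
  have : uniq (filter (preim f (pred1 y)) (enum C)) by rewrite filter_uniq ?enum_uniq.
  have mf c : c \in filter (preim f (pred1 y)) (enum C) -> f c = y /\ c \in C.
    by rewrite mem_filter mem_enum => /andP [/eqP].
  case: (filter _ _) mf => [|c1 [|c2 [|c3 r]]] // mf.
  rewrite /= !inE !negb_or => /and4P [/and3P [n12 n13 _] /andP [n23 _] _ _] _.
  have [f1 C1] := mf c1 (mem_head _ _).
  have [f2 C2] : f c2 = y /\ c2 \in C by apply: mf; rewrite !inE eqxx orbT.
  have [f3 C3] : f c3 = y /\ c3 \in C by apply: mf; rewrite !inE eqxx !orbT.
  have [a [h12 h13 h23]] := Hd c1 c2 c3 C1 C2 C3 n12 n13 n23.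
  have [[PB _] s1] := fP c1 C1.
  have [_ s2] := fP c2 C2.
  have [_ s3] := fP c3 C3.
  rewrite f1 in s1 PB; rewrite f2 in s2; rewrite f3 in s3.
  apply: (part1 h12 h13 h23 (HA c1 C1).2 (HA c2 C2).2 (HA c3 C3).2 PB).
  by rewrite !subsetI s1 s2 s3.
rewrite cardE -(size_map f) -/t.
have -> : size t = \sum_(i <- t) 1%N by rewrite sum1_size.
rewrite -big_undup_iterop_count.
apply: (@leq_trans (\sum_(i <- undup t) 2)%N).
  by apply: leq_sum => i _; rewrite iterop_addn1 cnt.
by rewrite big_const_seq count_predT iter_addn_0.
Qed.
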